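(* Let $A$ and $B$ be finite commutative groups and let $p_1,\dots,p_t$ be the distinct prime divisors of $|A|\,|B|$. For $i=1,\dots,t$ let $A_i$ and $B_i$ denote the (possibly trivial) $p_i$-primary components of $A$ and $B$, so that $A=A_1\times\cdots\times A_t$ and $B=B_1\times\cdots\times B_t$. Suppose $A_i=\mathbb{Z}_{q_{i,1}}\times\cdots\times\mathbb{Z}_{q_{i,n_i}}$ with each $q_{i,k}$ a power of $p_i$ ($n_i\ge 0$), and put $n=n_1+\cdots+n_t$, so that $A=(\mathbb{Z}_{q_{1,1}}\times\cdots\times\mathbb{Z}_{q_{1,n_1}})\times\cdots\times(\mathbb{Z}_{q_{t,1}}\times\cdots\times\mathbb{Z}_{q_{t,n_t}})$; attach one variable to each of these $n$ cyclic factors, the variables $X_{n_1+\cdots+n_{i-1}+1},\dots,X_{n_1+\cdots+n_i}$ belonging to $A_i$. Then $$B\binom{X_1,\dots,X_n}{A}=B_1\binom{X_1,\dots,X_{n_1}}{A_1}\times\cdots\times B_t\binom{X_{n-n_t+1},\dots,X_n}{A_t},$$ i.e. a $B$-polyfract $P=(P_1,\dots,P_t)$ (with $P_i$ a $B_i$-polyfract) has the periodicity given by $A$ if and only if each $P_i$ involves only the variables belonging to $A_i$ and is periodic with respect to $A_i$. Moreover, the set of maps $A\to B$ induced by these periodic polyfracts is exactly $$\{(a_1,\dots,a_t)\mapsto (f_1(a_1),\dots,f_t(a_t)) \;:\; f_1\in B_1^{A_1},\dots,f_t\in B_t^{A_t}\}.$$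
   Context: Notation: $\mathbb{Z}_r=\mathbb{Z}/r\mathbb{Z}$, with $\mathbb{Z}_0=\mathbb{Z}$ and $\mathbb{Z}_1=\{0\}$. For $\delta\in\mathbb{N}$, $\binom{X}{\delta}=X(X-1)\cdots(X-\delta+1)/\delta!$ and $\binom{X}{0}=1$; for $\delta\in\mathbb{N}^n$ the monofract is $\binom{X_1,\dots,X_n}{\delta_1,\dots,\delta_n}=\prod_{j}\binom{X_j}{\delta_j}$. For a finitely generated commutative group $B$, a $B$-polyfract in $X_1,\dots,X_n$ is a formal finite sum $P=\sum_{\delta\in\mathbb{N}^n}P_\delta\binom{X_1,\dots,X_n}{\delta_1,\dots,\delta_n}$ with coefficients $P_\delta\in B$; it is evaluated at $x\in\mathbb{Z}^n$ by $P(x)=\sum_\delta \big(\prod_j\binom{x_j}{\delta_j}\big)P_\delta\in B$ (integer multiples in $B$). The set of these is $B\binom{X_1,\dots,X_n}{\mathbb{Z}^n}$; if $B=B'\times B''$, a $B$-polyfract is identified with the pair of its coordinate polyfracts. For positive integers $q_1,\dots,q_n$, $B\binom{X_1,\dots,X_n}{\mathbb{Z}_{q_1}\times\cdots\times\mathbb{Z}_{q_n}}$ denotes the set of $B$-polyfracts $P$ whose evaluation map $\mathbb{Z}^n\to B$ is $q_j$-periodic in the $j$-th coordinate for every $j$; such a map is identified with the induced map $\mathbb{Z}_{q_1}\times\cdots\times\mathbb{Z}_{q_n}\to B$. When the domain is written as a product $A$ of cyclic groups, $B\binom{X_1,\dots,X_n}{A}$ means this set for the corresponding $q_j$. *)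

(* Defs.v *)
From HB Require Import structures.
From mathcomp Require Import all_boot all_order all_algebra.
Set Implicit Arguments. Unset Strict Implicit. Unset Printing Implicit Defensive.
Import Order.TTheory GRing.Theory Num.Theory.
Local Open Scope ring_scope.

(* Generalized binomial coefficient binom(x, k) = x(x-1)...(x-k+1)/k!  for x in Z,
   computed in Q; its value is an integer, and we return its numerator. *)
Definition binz (x : int) (k : nat) : int :=
  numq ((\prod_(j < k) (x - (j : nat)%:Z)%:~R) / (k`!)%:R : rat).

Definition expo (W : finType) := {ffun W -> nat}.

(* A B-polyfract: a formal finite sum  sum_t t.2 * binom(X, t.1). *)
Definition polyfract (W : finType) (B : zmodType) := seq (expo W * B).

Definition pf_coef (W : finType) (B : zmodType) (P : polyfract W B) (d : expo W) : B :=
  \sum_(t <- P | t.1 == d) t.2.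

Definition pf_eval (W : finType) (B : zmodType) (P : polyfract W B) (x : W -> int) : B :=
  \sum_(t <- P) (t.2 *~ (\prod_(w : W) binz (x w) (t.1 w))).

Definition shiftz (W : finType) (q : W -> nat) (x : W -> int) (w : W) : W -> int :=
  fun u => if u == w then x u + (q u)%:Z else x u.

Definition periodic (W : finType) (q : W -> nat) (T : Type) (f : (W -> int) -> T) : Prop :=
  forall (x : W -> int) (w : W), f (shiftz q x w) = f x.

(* The variable index type: variable (i,k) belongs to the k-th cyclic factor of A_i. *)
Definition vars (t : nat) (n : 'I_t -> nat) : finType := {i : 'I_t & 'I_(n i)}.

Definition restr_pt (t : nat) (n : 'I_t -> nat) (x : vars n -> int) (i : 'I_t)
  : 'I_(n i) -> int := fun k => x (Tagged (fun j => 'I_(n j)) k).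

Definition only_vars (t : nat) (n : 'I_t -> nat) (B : zmodType)
  (i : 'I_t) (P : polyfract (vars n) B) : Prop :=
  forall d : expo (vars n), pf_coef P d != 0 ->
    forall v : vars n, tag v != i -> d v = 0%N.

Definition restr_pf (t : nat) (n : 'I_t -> nat) (B : zmodType)
  (i : 'I_t) (P : polyfract (vars n) B) : polyfract 'I_(n i) B :=
  map (fun s : expo (vars n) * B =>
     ([ffun k : 'I_(n i) => s.1 (Tagged (fun j => 'I_(n j)) k)] : expo 'I_(n i), s.2)) P.

Arguments restr_pt {t n} x i.
Arguments restr_pf {t n B} i P.
Arguments only_vars {t n B} i P.

(* Main.v *)
Require Import Defs.
From HB Require Import structures.
From mathcomp Require Import all_boot all_order all_algebra all_fingroup all_solvable ring zify.
From Stdlib Require Import FunctionalExtensionality IndefiniteDescription.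
Set Implicit Arguments. Unset Strict Implicit. Unset Printing Implicit Defensive.
Import Order.TTheory GRing.Theory Num.Theory.
Local Open Scope ring_scope.

Definition br (x : int) (k : nat) : rat :=
  (\prod_(j < k) (x - (j : nat)%:Z)%:~R) / (k`!)%:R.

Lemma br0 x : br x 0 = 1.
Proof. by rewrite /br big_ord0 fact0 divr1. Qed.

Lemma br0S k : br 0 k.+1 = 0.
Proof. by rewrite /br big_ord_recl /= subr0 mul0r mul0r. Qed.

Lemma brS x k : br (x + 1) k.+1 = br x k.+1 + br x k.
Proof.
rewrite /br big_ord_recl [in X in _ = X + _]big_ord_recr /=.
have -> : \prod_(i < k) ((x + 1 - (bump 0 i : nat)%:Z)%:~R : rat)
          = \prod_(i < k) ((x - (i : nat)%:Z)%:~R).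
  apply: eq_bigr => i _; congr (_ %:~R); rewrite /bump /= add1n -addn1 PoszD.
  ring.
move: (\prod_(i < k) ((x - (i:nat)%:Z)%:~R : rat)) => P.
rewrite factS natrM.
have hk : (k`!)%:R != 0 :> rat by rewrite pnatr_eq0 -lt0n fact_gt0.
have hk1 : (k.+1)%:R != 0 :> rat by rewrite pnatr_eq0.
rewrite !rmorphB /= !rmorphD /= subr0.
rewrite -[(k.+1)%:R]natr1.
field.
by rewrite natr1 hk1 hk.
Qed.

Lemma br_int x k : exists z : int, br x k = z%:~R.
Proof.
elim: k x => [|k IH] x; first by exists 1; rewrite br0.
have hp : forall n : nat, (exists z : int, br n%:Z k.+1 = z%:~R)
   /\ (exists z : int, br (- n%:Z) k.+1 = z%:~R).
  elim=> [|n [[z1 h1] [z2 h2]]]; first by split; exists 0; rewrite ?oppr0 br0S.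
  split.
    have [z3 h3] := IH n%:Z.
    by exists (z1 + z3); rewrite -addn1 PoszD brS h1 h3 rmorphD.
  have [z3 h3] := IH (- (n.+1)%:Z).
  exists (z2 - z3).
  have := brS (- (n.+1)%:Z) k.
  have -> : - (n.+1)%:Z + 1 = - n%:Z by rewrite -addn1 PoszD; ring.
  by rewrite h2 h3 rmorphB /= => ->; rewrite addrK.
case: x => n; first by case: (hp n).
by rewrite NegzE; case: (hp n.+1).
Qed.

Lemma binzE x k : (binz x k)%:~R = br x k.
Proof.
have [z hz] := br_int x k.
by rewrite /binz -/(br x k) hz numq_int.
Qed.

Lemma binz_inj (a b : int) : (a%:~R : rat) = b%:~R -> a = b.
Proof. by move/eqP; rewrite eqr_int => /eqP. Qed.

Lemma binz0 x : binz x 0 = 1.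
Proof. by apply: binz_inj; rewrite binzE br0. Qed.

Lemma binz0S k : binz 0 k.+1 = 0.
Proof. by apply: binz_inj; rewrite binzE br0S. Qed.

Lemma binzS x k : binz (x + 1) k.+1 = binz x k.+1 + binz x k.
Proof. by apply: binz_inj; rewrite rmorphD /= !binzE brS. Qed.

Lemma binz_nat (n k : nat) : binz n%:Z k = ('C(n, k))%:R.
Proof.
elim: n k => [|n IH] [|k]; rewrite ?binz0 ?bin0 //.
  by rewrite binz0S bin0n.
by rewrite -addn1 PoszD binzS !IH addn1 binS natrD addrC.
Qed.

Section Group.
Variables (W : finType) (B G : zmodType).

Lemma pf_group (P : polyfract W B) (F : expo W -> B -> G) :
  (forall d, F d 0 = 0) -> (forall d a b, F d (a + b) = F d a + F d b) ->
  \sum_(t <- P) F t.1 t.2 = \sum_(d <- undup (map fst P)) F d (pf_coef P d).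
Proof.
move=> F0 FD.
have Fs : forall d (r : seq (expo W * B)) (Q : pred (expo W * B)),
    F d (\sum_(t <- r | Q t) t.2) = \sum_(t <- r | Q t) F d t.2.
  move=> d r Q; elim: r => [|a r IH]; first by rewrite !big_nil F0.
  by rewrite !big_cons; case: (Q a); rewrite ?FD IH.
rewrite /pf_coef.
under [RHS]eq_bigr => d _ do rewrite Fs.
under [RHS]eq_bigr => d _ do rewrite big_mkcond.
rewrite exchange_big /= [LHS]big_seq [RHS]big_seq.
apply: eq_bigr => t tP.
have ht : t.1 \in undup (map fst P) by rewrite mem_undup; apply: map_f.
rewrite (bigD1_seq t.1) ?undup_uniq //= eqxx.
rewrite big1 ?addr0 // => d hd.
by case: eqP => // e; case/negP: hd; rewrite e.
Qed.
End Group.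

Lemma mulcard (U : finZmodType) (c : U) : c *+ #|U| = 0.
Proof.
have := @expg_cardG _ [set: U]%G c (in_setT c).
by rewrite FinRing.zmodXgE cardsT.
Qed.
Lemma killc (U : finZmodType) (r : nat) (c : U) : coprime r #|U| -> c *+ r = 0 -> c = 0.
Proof.
move=> co hr.
have hU : (0 < #|U|)%N by apply/card_gt0P; exists 0.
have [a _ ha] := @Bezoutl #|U| r hU.
move: ha; rewrite coprime_sym in co; rewrite (eqP co) => /dvdnP [k hk].
have : c *+ (1 + a * r) = 0 by rewrite hk mulnC mulrnA mulcard mul0rn.
by rewrite mulrnDr mulr1n mulnC mulrnA hr mul0rn addr0.
Qed.

Section Diff.
Variables (W : finType) (G : zmodType).

Definition upd (x : W -> int) (w : W) (c : int) : W -> int :=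
  fun u => if u == w then x u + c else x u.

Definition Dl (w : W) (g : (W -> int) -> G) : (W -> int) -> G :=
  fun x => g (upd x w 1) - g x.

Lemma upd0 x w : upd x w 0 = x.
Proof. by apply: functional_extensionality => u; rewrite /upd addr0; case: eqP. Qed.

Lemma updD x w a b : upd (upd x w a) w b = upd x w (a + b).
Proof.
apply: functional_extensionality => u; rewrite /upd.
by case: eqP => _ //; rewrite addrA.
Qed.

Lemma updC x w a b : upd (upd x w a) w b = upd (upd x w b) w a.
Proof. by rewrite !updD addrC. Qed.

Definition perw (w : W) (r : int) (g : (W -> int) -> G) :=
  forall x, g (upd x w r) = g x.

Lemma perw_D w r g : perw w r g -> perw w r (Dl w g).
Proof. by move=> h x; rewrite /Dl updC !h. Qed.

Lemma perw_iter w r g m : perw w r g -> perw w r (iter m (Dl w) g).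
Proof. by move=> h; elim: m => //= m IH; apply: perw_D. Qed.

Lemma Dl0 w g : (forall x, Dl w g x = 0) -> forall x (s : nat), g (upd x w s%:Z) = g x.
Proof.
move=> h x; elim=> [|s IH]; first by rewrite upd0.
have := h (upd x w s); rewrite /Dl updD -addn1 PoszD => /eqP; rewrite subr_eq0 => /eqP ->.
exact: IH.
Qed.

Lemma Dl2 w (r : nat) g : (forall c : G, c *+ r = 0 -> c = 0) -> perw w r%:Z g ->
  (forall x, Dl w (Dl w g) x = 0) -> forall x, Dl w g x = 0.
Proof.
move=> kill per h x.
have hc := Dl0 h x.
have hs : forall s : nat, g (upd x w s%:Z) = g x + Dl w g x *+ s.
  elim=> [|s IH]; first by rewrite upd0 mulr0n addr0.
  rewrite -addn1 PoszD -updD.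
  have := hc s; rewrite /Dl => e.
  by rewrite mulrnDr mulr1n addrA -IH -e updD addrC subrK.
apply: kill; have := hs r; rewrite per => /eqP.
by rewrite addrC -subr_eq subrr => /eqP <-.
Qed.

Lemma Dl_desc w (r : nat) g m : (forall c : G, c *+ r = 0 -> c = 0) -> perw w r%:Z g ->
  (forall x, iter m (Dl w) g x = 0) -> forall x, Dl w g x = 0.
Proof.
move=> kill per.
elim: m => [|m IH] h; first by move=> x; rewrite /Dl; have := h; rewrite /= => h'; rewrite !h' subr0.
case: m IH h => [|m] IH h; first exact: h.
apply: IH => x.
apply: (Dl2 kill); first exact: perw_iter.
exact: h.
Qed.

End Diff.

Section Mono.
Variables (W : finType) (G : zmodType).

Definition mono (d : expo W) (x : W -> int) : int := \prod_(u : W) binz (x u) (d u).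
Definition setd (d : expo W) (w : W) (k : nat) : expo W :=
  [ffun u => if u == w then k else d u].

Lemma Dl_mono (c : G) d w :
  Dl w (fun x => c *~ mono d x) =
  fun x => if d w is k.+1 then c *~ mono (setd d w k) x else 0.
Proof.
apply: functional_extensionality => x; rewrite /Dl /mono.
rewrite (bigD1 w) //= [X in _ - c *~ X](bigD1 w) //=.
have -> : \prod_(u | u != w) binz (upd x w 1 u) (d u) = \prod_(u | u != w) binz (x u) (d u).
  by apply: eq_bigr => u /negPf hu; rewrite /upd hu.
rewrite /upd eqxx.
case E: (d w) => [|k]; first by rewrite !binz0 subrr.
rewrite [in RHS](bigD1 w) //= /setd ffunE eqxx binzS.
have -> : \prod_(u | u != w) binz (x u) ([ffun u => if u == w then k else d u] u) = \prod_(u | u != w) binz (x u) (d u).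
  by apply: eq_bigr => u /negPf hu; rewrite ffunE hu.
by rewrite -mulrzBr mulrDl addrC addKr.
Qed.

Lemma Dl_zero w m : iter m (Dl w) (fun _ : W -> int => (0 : G)) = fun _ => 0.
Proof.
elim: m => //= m ->; apply: functional_extensionality => x; by rewrite /Dl subrr.
Qed.

Lemma iter_mono (c : G) (w : W) m (d : expo W) : (d w < m)%N ->
  iter m (Dl w) (fun x => c *~ mono d x) = fun _ => 0.
Proof.
elim: m d => [|m IH] d //.
rewrite ltnS => hm; rewrite iterSr Dl_mono.
case E: (d w) => [|k].
  by rewrite Dl_zero.
by apply: IH; rewrite ffunE eqxx -ltnS -E.
Qed.

Lemma iter_sum (I : Type) (r : seq I) (F : I -> (W -> int) -> G) w m :
  iter m (Dl w) (fun x => \sum_(t <- r) F t x) =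
  fun x => \sum_(t <- r) iter m (Dl w) (F t) x.
Proof.
elim: m => //= m ->; apply: functional_extensionality => x.
by rewrite /Dl -sumrB.
Qed.

Lemma pf_nil (P : polyfract W G) w : exists m, forall x, iter m (Dl w) (pf_eval P) x = 0.
Proof.
exists (\max_(t <- P) t.1 w).+1 => x.
rewrite /pf_eval.
have -> : (fun x => \sum_(t <- P) t.2 *~ (\prod_(w0 : W) binz (x w0) (t.1 w0)))
   = (fun x => \sum_(t <- P) (fun y => t.2 *~ mono t.1 y) x) by [].
rewrite iter_sum big_seq big1 // => t tP.
rewrite iter_mono // ltnS.
by apply: (@leq_bigmax_seq _ _ _ (fun t : expo W * G => t.1 w)).
Qed.

End Mono.

Section Coef.
Variables (W : finType) (G : zmodType).

Lemma coef_mem (P : polyfract W G) d : pf_coef P d != 0 -> d \in undup (map fst P).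
Proof.
rewrite mem_undup => h; apply/negPn/negP => hn; case/negP: h.
rewrite /pf_coef big_seq_cond big1 // => t /andP[tP /eqP e].
by case/negP: hn; rewrite -e; apply: map_f.
Qed.

Lemma pf_evalE (P : polyfract W G) x :
  pf_eval P x = \sum_(d <- undup (map fst P)) pf_coef P d *~ mono d x.
Proof.
rewrite /pf_eval (@pf_group _ _ _ P (fun d b => b *~ mono d x)) //.
- by move=> d; rewrite mul0rz.
- by move=> d a b; rewrite mulrzDl.
Qed.

Lemma mono_y (d : expo W) : mono d (fun u => (d u)%:Z) = 1.
Proof. by rewrite /mono big1 // => u _; rewrite binz_nat binn. Qed.

Lemma mono_y0 (d' : expo W) (y : W -> int) w : y w = 0 -> (0 < d' w)%N -> mono d' y = 0.
Proof.
move=> hy hd; rewrite /mono (bigD1 w) //= hy.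
by case: (d' w) hd => // k _; rewrite binz0S mul0r.
Qed.

Lemma coef_vanish (P : polyfract W G) (w : W) :
  (forall x (s : nat), pf_eval P (upd x w s%:Z) = pf_eval P x) ->
  forall d, pf_coef P d != 0 -> d w = 0%N.
Proof.
move=> h d.
move: {2}(\sum_u d u)%N (erefl (\sum_u d u)%N) => N.
elim/ltn_ind: N d => N IH d hN hc.
case E: (d w) => [//|k].
pose y := fun u => (d u)%:Z.
pose y0 := fun u => if u == w then 0 else (d u)%:Z.
have ey : y = upd y0 w (d w)%:Z.
  apply: functional_extensionality => u; rewrite /y /y0 /upd.
  by case: eqP => [->|]; rewrite ?add0r.
have e0 : pf_eval P y - pf_eval P y0 = 0 by rewrite ey h subrr.
move: e0; rewrite !pf_evalE -sumrB.
rewrite (bigD1_seq d) ?undup_uniq ?coef_mem //=.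
rewrite big1.
  rewrite addr0 -mulrzBr mono_y (@mono_y0 d y0 w); first last.
  - by rewrite E.
  - by rewrite /y0 eqxx.
  by rewrite subr0 => /eqP; rewrite (negPf hc).
move=> d' hd'.
have [->|hc'] := eqVneq (pf_coef P d') 0; first by rewrite !mul0rz subrr.
case E': (d' w) => [|k'].
  have -> : mono d' y = mono d' y0.
    apply: eq_bigr => u _; rewrite /y /y0.
    by case: eqP => [->|//]; rewrite E' !binz0.
  by rewrite subrr.
rewrite (@mono_y0 d' y0 w); first last.
- by rewrite E'.
- by rewrite /y0 eqxx.
rewrite subr0.
case: (boolP [exists u, (d u < d' u)%N]).
  case/existsP => u hu.
  by rewrite /mono (bigD1 u) //= /y binz_nat bin_small // mul0r mulr0z.
move/existsPn => hle.
have hle' : forall u, (d' u <= d u)%N by move=> u; have := hle u; rewrite -leqNgt.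
have [u hu] : exists u, d' u != d u.
  case: (boolP [exists u, d' u != d u]) => [/existsP//|/existsPn hn]; case/negP: hd'.
  by apply/eqP/ffunP => v; apply/eqP; have := hn v; rewrite negbK.
have hlt : (\sum_v d' v < N)%N.
  rewrite -hN (bigD1 u) //= [X in (_ < X)%N](bigD1 u) //=.
  have h1 : (d' u < d u)%N by rewrite ltn_neqAle hu hle'.
  have h2 : (\sum_(v | v != u) d' v <= \sum_(v | v != u) d v)%N by apply: leq_sum => v _; apply: hle'.
  lia.
by have := IH _ hlt d' erefl hc'; rewrite E'.
Qed.

End Coef.

Lemma per_vanish (W : finType) (U : finZmodType) (P : polyfract W U) (w : W) (r : nat) :
  coprime r #|U| -> (forall x, pf_eval P (upd x w r%:Z) = pf_eval P x) ->
  forall d, pf_coef P d != 0 -> d w = 0%N.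
Proof.
move=> co per; apply: coef_vanish.
have [m hm] := pf_nil P w.
apply: Dl0; apply: (Dl_desc (r := r) _ per hm).
by move=> c; apply: killc.
Qed.

Lemma shiftzE (W : finType) (q : W -> nat) x w : shiftz q x w = upd x w (q w)%:Z.
Proof.
by apply: functional_extensionality => u; rewrite /shiftz /upd; case: eqP => // ->.
Qed.

Section Vars.
Variables (t : nat) (n : 'I_t -> nat).

Lemma prod_tag (F : vars n -> int) i : (forall v, tag v != i -> F v = 1) ->
  \prod_v F v = \prod_(k : 'I_(n i)) F (Tagged (fun j => 'I_(n j)) k).
Proof.
move=> h.
rewrite (big_tag (fun i (k : 'I_(n i)) => F (Tagged (fun j => 'I_(n j)) k)) i).
rewrite [RHS]big_mkcond; apply: eq_bigr => v _; rewrite inE.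
case: eqP => e; first by rewrite (untagE _ _ e) etaggedK.
by rewrite h //; apply/eqP.
Qed.

Definition ext i (y : 'I_(n i) -> int) : vars n -> int := fun v => untag 0 y v.

Lemma restr_ext i y : restr_pt (@ext i y) i = y.
Proof.
apply: functional_extensionality => k; rewrite /restr_pt /ext /untag /=.
by case: eqP => // e; rewrite (eq_axiomK e).
Qed.

Lemma eval_restr (B : zmodType) i (P : polyfract (vars n) B) x :
  only_vars i P -> pf_eval P x = pf_eval (restr_pf i P) (restr_pt x i).
Proof.
move=> ov.
rewrite /pf_eval /restr_pf big_map /=.
rewrite (@pf_group _ _ _ P (fun d b => b *~ \prod_w binz (x w) (d w))) ; last 2 first.
- by move=> *; rewrite mul0rz.
- by move=> *; rewrite mulrzDl.
rewrite (@pf_group _ _ _ P (fun d b => b *~ \prod_(w : 'I_(n i)) binz (restr_pt x i w)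
     ([ffun k => d (Tagged (fun j => 'I_(n j)) k)] w))) ; last 2 first.
- by move=> *; rewrite mul0rz.
- by move=> *; rewrite mulrzDl.
apply: eq_bigr => d _.
have [->|hc] := eqVneq (pf_coef P d) 0; first by rewrite !mul0rz.
congr (_ *~ _); rewrite (@prod_tag _ i).
  by apply: eq_bigr => k _; rewrite ffunE.
by move=> v hv; rewrite (ov d hc v hv) binz0.
Qed.

End Vars.

Section Claims.
Variables (t : nat) (n : 'I_t -> nat) (q : forall i : 'I_t, 'I_(n i) -> nat).
Let qA := fun v : vars n => @q (tag v) (tagged v).
Let TT := (fun j : 'I_t => 'I_(n j)).

Lemma untag_same (R : Type) (r0 : R) i (F : 'I_(n i) -> R) (k : 'I_(n i)) :
  untag r0 F (Tagged TT k) = F k.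
Proof. by rewrite /untag /=; case: eqP => // e; rewrite (eq_axiomK e). Qed.

Lemma restr_shift_same i x (k : 'I_(n i)) :
  restr_pt (shiftz qA x (Tagged TT k)) i = shiftz (@q i) (restr_pt x i) k.
Proof.
apply: functional_extensionality => k'; rewrite /restr_pt /shiftz.
by rewrite eq_Tagged /=.
Qed.

Lemma restr_shift_other i j (hj : j != i) x (k : 'I_(n j)) :
  restr_pt (shiftz qA x (Tagged TT k)) i = restr_pt x i.
Proof.
apply: functional_extensionality => k'; rewrite /restr_pt /shiftz.
case: eqP => // e; have := congr1 tag e => /= e'.
by rewrite e' eqxx in hj.
Qed.

Lemma ext_shift i y (k : 'I_(n i)) :
  ext (shiftz (@q i) y k) = shiftz qA (ext y) (Tagged TT k).
Proof.
apply: functional_extensionality => -[j k'].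
case: (eqVneq j i) => [e|ne].
  subst j; rewrite /ext /shiftz !untag_same eq_Tagged /=.
  by case: eqP.
rewrite /ext /shiftz untag_dflt //.
case: eqP => [e|_]; last by rewrite untag_dflt.
by have := congr1 tag e => /= e'; rewrite e' eqxx in ne.
Qed.

Variable (B : 'I_t -> finZmodType).

Lemma claim1 (P : forall i, polyfract (vars n) (B i)) :
  (forall i, only_vars i (P i) /\ periodic (@q i) (pf_eval (restr_pf i (P i)))) ->
  periodic qA (fun x i => pf_eval (P i) x).
Proof.
move=> h x [j k]; apply: functional_extensionality_dep => i.
have [ov per] := h i.
rewrite !(eval_restr _ ov).
case: (eqVneq j i) => [e|ne].
  by subst j; rewrite restr_shift_same per.
by rewrite (restr_shift_other ne).
Qed.

Lemma claim1' (P : forall i, polyfract (vars n) (B i)) :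
  (forall i v, tag v != i -> coprime (qA v) #|B i|) ->
  periodic qA (fun x i => pf_eval (P i) x) ->
  (forall i, only_vars i (P i) /\ periodic (@q i) (pf_eval (restr_pf i (P i)))).
Proof.
move=> hco per i.
have peri : forall x w, pf_eval (P i) (shiftz qA x w) = pf_eval (P i) x.
  by move=> x w; have := per x w => /(congr1 (fun F => F i)).
have ov : only_vars i (P i).
  move=> d hc v hv.
  apply: (per_vanish (hco i v hv) _ hc).
  by move=> x; rewrite -(peri x v) shiftzE.
split=> // y k.
have e1 := eval_restr (ext y) ov; rewrite restr_ext in e1.
have e2 := eval_restr (ext (shiftz (@q i) y k)) ov; rewrite restr_ext in e2.
by rewrite -e1 -e2 ext_shift peri.
Qed.

End Claims.

Section Lift.
Variables (t : nat) (n : 'I_t -> nat).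
Let TT := (fun j : 'I_t => 'I_(n j)).

Definition liftpf (B : zmodType) i (Q : polyfract 'I_(n i) B) : polyfract (vars n) B :=
  map (fun s : expo 'I_(n i) * B => ([ffun v => untag 0%N (fun k => s.1 k) v] : expo (vars n), s.2)) Q.

Lemma restr_lift (B : zmodType) i (Q : polyfract 'I_(n i) B) : restr_pf i (liftpf Q) = Q.
Proof.
rewrite /restr_pf /liftpf -map_comp -[RHS]map_id; apply: eq_map => -[d b] /=.
congr (_, _); apply/ffunP => k; rewrite !ffunE.
by rewrite /untag /=; case: eqP => // e; rewrite (eq_axiomK e).
Qed.

Lemma ov_lift (B : zmodType) i (Q : polyfract 'I_(n i) B) : only_vars i (liftpf Q).
Proof.
move=> d hc v hv.
have := coef_mem hc; rewrite mem_undup /liftpf -map_comp => /mapP [[d' b] _ /= ->].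
by rewrite ffunE untag_dflt.
Qed.
End Lift.

Section Uni.
Variable G : zmodType.

Definition D1 (h : int -> G) : int -> G := fun y => h (y + 1) - h y.

Lemma zero_ext (e : int -> G) : (forall y, e (y + 1) = e y) -> e 0 = 0 -> forall y, e y = 0.
Proof.
move=> h e0.
have hp : forall m : nat, e m%:Z = 0 /\ e (- m%:Z) = 0.
  elim=> [|m [h1 h2]]; first by rewrite oppr0 e0.
  split; first by rewrite -addn1 PoszD h.
  by rewrite -h -addn1 PoszD opprD addrNK.
by case=> m; [case: (hp m) | rewrite NegzE; case: (hp m.+1)].
Qed.

Lemma sub4 (a b c d : G) : a - b - (c - d) = (a - c) - (b - d).
Proof. by rewrite !opprB addrACA [RHS]addrACA [- c + _]addrC. Qed.

Lemma newton N (h : int -> G) : (forall y, iter N D1 h y = 0) ->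
  forall y, h y = \sum_(j < N) (iter j D1 h 0) *~ binz y j.
Proof.
elim: N h => [|N IH] h hN y.
  by rewrite big_ord0; apply: hN.
have hD := IH (D1 h) (ltac:(by move=> z; rewrite -iterSr; apply: hN)).
pose S := fun y => \sum_(j < N.+1) (iter j D1 h 0) *~ binz y j.
have eS : forall y, S (y + 1) - S y = D1 h y.
  move=> z; rewrite /S -sumrB big_ord_recl /= !binz0 subrr add0r hD.
  apply: eq_bigr => j _; rewrite -mulrzBr /bump /= add1n binzS addrAC subrr add0r.
  by rewrite add0n -iterSr.
have hS0 : S 0 = h 0.
  rewrite /S big_ord_recl binz0 mulr1z big1 ?addr0 //.
  by move=> j _; rewrite binz0S mulr0z.
change (h y = S y); clearbody S.
suff: h y - S y = 0 by move=> /eqP; rewrite subr_eq0 => /eqP ->.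
apply: (@zero_ext (fun y => h y - S y)) => [z|] /=; last by rewrite hS0 subrr.
apply/eqP; rewrite -subr_eq0.
have := eS z; rewrite /D1 => e.
by rewrite sub4 e subrr.
Qed.
End Uni.
Arguments D1 {G}.


Section Act.
Variable G : zmodType.

Implicit Types (Q R : {poly int}) (h : int -> G) (y : int) (c : int).

Lemma sumMz (I : Type) (r : seq I) (P : pred I) (F : I -> G) c :
  (\sum_(i <- r | P i) F i) *~ c = \sum_(i <- r | P i) F i *~ c.
Proof.
elim: r => [|a r IH]; first by rewrite !big_nil mul0rz.
by rewrite !big_cons; case: (P a); rewrite ?mulrzDl IH.
Qed.

Definition act (Q : {poly int}) (h : int -> G) : int -> G :=
  fun y => \sum_(i < size Q) h (y + i%:Z) *~ Q`_i.

Lemma act_widen m Q h y : (size Q <= m)%N ->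
  act Q h y = \sum_(i < m) h (y + i%:Z) *~ Q`_i.
Proof.
move=> hm; rewrite /act (big_ord_widen m (fun i => h (y + i%:Z) *~ Q`_i) hm).
rewrite big_mkcond; apply: eq_bigr => i _.
by case: ifP => // /negbT; rewrite -leqNgt => hi; rewrite nth_default // mulr0z.
Qed.

Lemma act_ext Q h h' : (forall y, h y = h' y) -> forall y, act Q h y = act Q h' y.
Proof. by move=> e y; apply: eq_bigr => i _; rewrite e. Qed.

Lemma actD Q R h y : act (Q + R) h y = act Q h y + act R h y.
Proof.
pose m := maxn (size Q) (size R).
rewrite !(@act_widen m) ?leq_maxl ?leq_maxr //; last first.
  by apply: leq_trans (size_polyD _ _) _.
by rewrite -big_split; apply: eq_bigr => i _; rewrite coefD mulrzDr.
Qed.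

Lemma actN Q h y : act (- Q) h y = - act Q h y.
Proof.
rewrite /act size_polyN -sumrN; apply: eq_bigr => i _.
by rewrite coefN mulrNz.
Qed.

Lemma actCM c R h y : act (c%:P * R) h y = act R h y *~ c.
Proof.
rewrite (@act_widen (size R)); last by rewrite mul_polyC; apply: size_scale_leq.
rewrite /act sumMz; apply: eq_bigr => i _.
by rewrite coefCM mulrzA_C mulrC.
Qed.

Lemma actC c h y : act c%:P h y = h y *~ c.
Proof. by rewrite -[c%:P]mulr1 actCM -polyC1 (@act_widen 1) ?size_polyC ?leq_b1 // big_ord1 coefC /= addr0 mulr1z. Qed.

Lemma actX Q h y : act ('X * Q) h y = act Q h (y + 1).
Proof.
rewrite (@act_widen (size Q).+1); last by apply: leq_trans (size_mul_leq _ _) _; rewrite size_polyX.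
rewrite big_ord_recl coefXM /= mulr0z add0r; apply: eq_bigr => i _.
by rewrite coefXM /= add0n /bump /= add1n -addn1 PoszD addrA [y + _ + 1]addrAC.
Qed.

Lemma actM Q R h y : act (Q * R) h y = act Q (act R h) y.
Proof.
elim/poly_ind: Q R h y => [|Q c IH] R h y.
  by rewrite mul0r /act size_poly0 !big_ord0.
rewrite mulrDl actD actD actCM actC -mulrA IH.
rewrite [Q * _]mulrC actX.
congr (_ + _).
rewrite (@act_ext Q (act ('X * R) h) (fun z => act R h (z + 1))); last by move=> z; rewrite actX.
by rewrite /act; apply: eq_bigr => i _; rewrite addrAC.
Qed.

End Act.

Section Act2.
Variable G : zmodType.
Implicit Types (Q R : {poly int}) (h : int -> G) (y : int) (c : int).

Lemma act1 h y : act 1 h y = h y.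
Proof. by rewrite -polyC1 actC mulr1z. Qed.

Lemma actXsub1 h y : act ('X - 1) h y = D1 h y.
Proof. by rewrite actD actN -['X]mulr1 actX !act1. Qed.

Lemma act_iter N h y : act (('X - 1) ^+ N) h y = iter N D1 h y.
Proof.
elim: N h y => [|N IH] h y; first by rewrite expr0 act1.
rewrite exprS actM actXsub1 /D1 !IH /=.
by [].
Qed.

Lemma actXn m h y : act ('X ^+ m) h y = h (y + m%:Z).
Proof.
elim: m y => [|m IH] y; first by rewrite expr0 act1 addr0.
by rewrite exprS actX IH -addn1 PoszD addrAC addrA.
Qed.

Lemma act0f Q y : act Q (fun _ => (0 : G)) y = 0.
Proof. by rewrite /act big1 // => i _; rewrite mul0rz. Qed.

End Act2.

Section PolyId.
Variable R : comPzRingType.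

Lemma L1 (pi a b : R) n : exists S, (a + pi * b) ^+ n = a ^+ n + pi * S.
Proof.
elim: n => [|n [S IH]]; first by exists 0; rewrite !expr0 mulr0 addr0.
exists (b * a ^+ n + a * S + pi * b * S).
rewrite exprS IH exprS; ring.
Qed.

Lemma L3 (A c : R) e : exists S, (A + c) ^+ e = c ^+ e + A * S.
Proof.
elim: e => [|e [S IH]]; first by exists 0; rewrite !expr0 mulr0 addr0.
exists (c ^+ e + (A + c) * S).
rewrite exprS IH exprS; ring.
Qed.

Lemma L2 (p : nat) (z : R) : prime p -> exists T, (z - 1) ^+ p = z ^+ p - 1 + p%:R * T.
Proof.
move=> pp.
have p0 : (0 < p)%N := prime_gt0 pp.
pose T0 := \sum_(i < p.+1) (if (0 < i < p)%N then z ^+ (p - i) * (-1) ^+ i *+ ('C(p, i) %/ p) else 0).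
have e1 : (z - 1) ^+ p = z ^+ p + (-1) ^+ p + p%:R * T0.
  rewrite exprDn /T0 mulr_sumr.
  rewrite (_ : z ^+ p = \sum_(i < p.+1) (if (i : nat) == 0%N then z ^+ p else 0)); last first.
    by rewrite big_ord_recl /= big1 ?addr0 // => i _.
  rewrite (_ : (-1) ^+ p = \sum_(i < p.+1) (if (i : nat) == p then (-1) ^+ p else 0) :> R); last first.
    rewrite big_ord_recr /= eqxx big1 ?add0r // => i _.
    by case: i => i hi /=; rewrite eqn_leq [(p <= i)%N]leqNgt hi andbF.
  rewrite -!big_split; apply: eq_bigr => i _ /=.
  case: i => [[|i] hi] /=.
    by rewrite subn0 expr0 mulr1 bin0 mulr1n eq_sym (gtn_eqF p0) addr0 mulr0 addr0.
  case: (eqVneq i.+1 p) => [e|ne].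
    by rewrite e subnn expr0 mul1r binn mulr1n ltnn mulr0 addr0 add0r.
  have hip : (i.+1 < p)%N by rewrite ltn_neqAle ne -ltnS.
  rewrite ifT; last exact: hip.
  rewrite !add0r.
  have hd : (p %| 'C(p, i.+1))%N by apply: prime_dvd_bin => //; apply/andP; split.
  by rewrite -{1}(divnK hd) mulrnA mulr_natl.
case: (even_prime pp) => [p2|podd].
  exists (T0 + 1); rewrite e1 p2; ring.
exists T0; rewrite e1 -signr_odd podd expr1.
by [].
Qed.

End PolyId.

Lemma Ck (p k : nat) : prime p ->
  exists H : {poly int}, ('X - 1) ^+ (p ^ k) = 'X ^+ (p ^ k) - 1 + p%:R * H.
Proof.
move=> pp; elim: k => [|k [H IH]].
  by exists 0; rewrite expn0 !expr1 mulr0 addr0.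
have [S hS] := L1 (p%:R) ('X ^+ (p ^ k) - 1) H p.
have [T hT] := L2 ('X ^+ (p ^ k) : {poly int}) pp.
exists (T + S).
by rewrite expnSr !exprM IH hS hT mulrDr addrA.
Qed.

Lemma nilp (G : zmodType) (p k e : nat) (h : int -> G) : prime p ->
  (forall y, h (y + (p ^ k)%:Z) = h y) -> (forall g : G, g *+ (p ^ e) = 0) ->
  forall y, iter (p ^ k * e) D1 h y = 0.
Proof.
move=> pp per kill y.
rewrite -act_iter exprM.
have [H eH] := Ck k pp.
rewrite eH.
have [S eS] := L3 ('X ^+ (p ^ k) - 1) (p%:R * H) e.
rewrite eS actD.
rewrite [_ * S]mulrC actM (@act_ext _ S (act ('X ^+ (p ^ k) - 1) h) (fun _ => 0)); last first.
  by move=> z; rewrite actD actN actXn act1 per subrr.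
rewrite act0f addr0 exprMn -natrX -polyC_natr actCM mulrz_nat.
exact: kill.
Qed.

Lemma iter_D1_mulz (G : zmodType) (b : G) (u : int -> int) j z :
  iter j D1 (fun y => b *~ u y) z = b *~ iter j D1 u z.
Proof.
elim: j z => [|j IH] z //=.
by rewrite /D1 !IH mulrzBr.
Qed.

Lemma pnat_pow (p n : nat) : prime p -> p.-nat n -> n = (p ^ logn p n)%N.
Proof. by move=> pp hn; rewrite -p_part part_pnat_id. Qed.

Lemma prod_repl (W : finType) (U : zmodType) (F H : W -> int) :
  (forall w (b : U), b *~ F w = b *~ H w) ->
  forall b : U, b *~ \prod_w F w = b *~ \prod_w H w.
Proof.
move=> h.
elim/big_rec2: _ => [b //|w y1 y2 _ IH b].
by rewrite mulrzA h -mulrzA [H w * y2]mulrC [LHS]mulrzA IH -mulrzA [y1 * _]mulrC.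
Qed.

Section Exist.
Variables (W : finType) (U : finZmodType) (p : nat) (q : W -> nat) (f : (W -> int) -> U).
Hypotheses (pp : prime p) (hq : forall w, p.-nat (q w)) (hU : p.-nat #|U|) (per : periodic q f).

Let e := logn p #|U|.
Let L := (\prod_w q w)%N.

Lemma kill_e (g : U) : g *+ (p ^ e) = 0.
Proof. by rewrite /e -(pnat_pow pp hU) mulcard. Qed.

Lemma L_pnat : p.-nat L.
Proof. by rewrite /L; elim/big_rec: _ => // w m _ hm; rewrite pnatM hq hm. Qed.

Lemma L_gt0 : (0 < L)%N.
Proof. by have := L_pnat; rewrite /pnat => /andP[]. Qed.

Lemma per_nat x w (m : nat) : f (upd x w (q w * m)%N%:Z) = f x.
Proof.
elim: m x => [|m IH] x; first by rewrite muln0 upd0.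
by rewrite mulnS PoszD -updD IH -shiftzE per.
Qed.

Lemma per_L x w : f (upd x w L%:Z) = f x.
Proof.
by rewrite /L (bigD1 w) //= per_nat.
Qed.

Lemma per_Lnat x w (m : nat) : f (upd x w (L * m)%N%:Z) = f x.
Proof.
elim: m x => [|m IH] x; first by rewrite muln0 upd0.
by rewrite mulnS PoszD -updD IH per_L.
Qed.

Lemma per_Lint x w (c : int) : f (upd x w (L%:Z * c)) = f x.
Proof.
case: c => m; first by rewrite -PoszM per_Lnat.
have e' := per_Lnat (upd x w (L%:Z * Negz m)) w m.+1; rewrite updD in e'.
by rewrite -e' NegzE mulrN PoszM addNr upd0.
Qed.

Lemma f_mod (s : seq W) (z z' : W -> int) :
  (forall w, w \notin s -> z w = z' w) ->
  (forall w, exists c : int, z w = z' w + L%:Z * c) -> f z = f z'.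
Proof.
elim: s z => [|w s IH] z h1 h2.
  by congr f; apply: functional_extensionality => u; apply: h1.
have [c hc] := h2 w.
rewrite -(per_Lint z w (- c)).
apply: IH.
  move=> u hu; rewrite /upd; case: eqP => [->|ne].
    by rewrite hc mulrN addrK.
  by apply: h1; rewrite inE negb_or hu andbT; apply/eqP.
move=> u; rewrite /upd; case: eqP => [->|_]; last exact: h2.
by exists 0; rewrite hc mulrN addrK mulr0 addr0.
Qed.


Definition ind (a y : int) : int := if ((y %% L%:Z)%Z == a) then 1 else 0.
Let K := logn p L.
Let N := (p ^ K * e)%N.
Definition cf (a : int) (j : nat) : int := iter j D1 (ind a) 0.

Lemma ind_per a y : ind a (y + L%:Z) = ind a y.
Proof. by rewrite /ind modzDr. Qed.

Lemma ind_rep a (b : U) y : b *~ ind a y = b *~ (\sum_(j < N) cf a j * binz y j).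
Proof.
have hn : forall y, iter N D1 (fun z => b *~ ind a z) y = 0.
  apply: nilp => //; last exact: kill_e.
  by move=> z; rewrite /K -(pnat_pow pp L_pnat) ind_per.
rewrite (newton hn y) mulrz_sumr; apply: eq_bigr => j _.
by rewrite iter_D1_mulz mulrzA.
Qed.

Lemma f_decomp x : f x = \sum_(a : {ffun W -> 'I_L}) f (fun w => (a w : nat)%:Z) *~ \prod_w ind (a w : nat)%:Z (x w).
Proof.
have L0 : L%:Z != 0 by rewrite eqz_nat -lt0n L_gt0.
have hlt : forall w, (`|(x w %% L%:Z)%Z| < L)%N.
  move=> w; rewrite -ltz_nat gez0_abs ?modz_ge0 //.
  by apply: ltz_pmod; rewrite ltz_nat L_gt0.
pose a0 : {ffun W -> 'I_L} := [ffun w => Ordinal (hlt w)].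
have ea : forall w, ((a0 w : nat)%:Z) = (x w %% L%:Z)%Z.
  by move=> w; rewrite ffunE /= gez0_abs ?modz_ge0.
rewrite (bigD1 a0) //=.
rewrite [X in _ *~ X]big1; last by move=> w _; rewrite /ind ea eqxx.
rewrite [X in _ + X]big1 ?mulr1z ?addr0.
  apply: (@f_mod (enum W)); first by move=> w; rewrite mem_enum.
  move=> w; exists (x w %/ L%:Z)%Z; rewrite ea addrC mulrC.
  exact: divz_eq.
move=> a ha.
have [w hw] : exists w, a w != a0 w.
  case: (boolP [exists w, a w != a0 w]) => [/existsP//|/existsPn hn]; case/negP: ha.
  by apply/eqP/ffunP => v; apply/eqP; have := hn v; rewrite negbK.
rewrite (bigD1 w) //= {1}/ind -ea.
have -> : ((a0 w : nat)%:Z == (a w : nat)%:Z) = false.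
  by apply/negbTE; rewrite eqz_nat eq_sym.
by rewrite mul0r mulr0z.
Qed.

Lemma exist_main : exists Q : polyfract W U, forall y, pf_eval Q y = f y.
Proof.
exists [seq ([ffun w => (d w : nat)] : expo W,
             f (fun w => (a w : nat)%:Z) *~ \prod_w cf (a w : nat)%:Z (d w))
       | a : {ffun W -> 'I_L} <- enum {ffun W -> 'I_L}, d : {ffun W -> 'I_N} <- enum {ffun W -> 'I_N}].
move=> y.
rewrite f_decomp /pf_eval big_allpairs_dep /= big_enum /=.
apply: eq_bigr => a _.
rewrite big_enum /=.
rewrite (@prod_repl W U _ (fun w => \sum_(j < N) cf (a w : nat)%:Z j * binz (y w) j)); last first.
  by move=> w b; apply: ind_rep.
rewrite bigA_distr_bigA /= mulrz_sumr.
apply: eq_bigr => d _.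
rewrite big_split /= mulrzA.
by congr (_ *~ _); apply: eq_bigr => w _; rewrite ffunE.
Qed.

End Exist.

Lemma exist_pf (W : finType) (U : finZmodType) (p : nat) (q : W -> nat) (f : (W -> int) -> U) :
  prime p -> (forall w, p.-nat (q w)) -> p.-nat #|U| -> periodic q f ->
  exists Q : polyfract W U, forall y, pf_eval Q y = f y.
Proof. move=> pp hq hU per; exact: (exist_main pp hq hU per). Qed.

Unset Implicit Arguments.
Theorem theorem3p15
  (t : nat) (p : 'I_t -> nat) (n : 'I_t -> nat)
  (q : forall i : 'I_t, 'I_(n i) -> nat)
  (B : 'I_t -> finZmodType)
  (hp_prime : forall i, prime (p i))
  (hp_inj : injective p)
  (hp_div : forall i, (p i %| (\prod_(v : vars n) q (tag v) (tagged v))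
                              * (\prod_(j < t) #|{: B j}|))%N)
  (hq : forall i k, (p i).-nat (q i k))
  (hB : forall i, (p i).-nat #|{: B i}|) :
  let qA := fun v : vars n => q (tag v) (tagged v) in
  (forall P : forall i, polyfract (vars n) (B i),
     periodic qA (fun x => fun i => pf_eval (P i) x)
     <-> (forall i, only_vars i (P i) /\ periodic (q i) (pf_eval (restr_pf i (P i)))))
  /\
  (forall F : (vars n -> int) -> forall i, B i,
     (exists P : forall i, polyfract (vars n) (B i),
        periodic qA (fun x => fun i => pf_eval (P i) x)
        /\ forall x, (fun i => pf_eval (P i) x) = F x)
     <->
     (exists f : forall i, ('I_(n i) -> int) -> B i,
        (forall i, periodic (q i) (f i))
        /\ forall x, F x = (fun i => f i (restr_pt x i)))).
Proof.
move=> qA.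
have hco : forall i (v : vars n), tag v != i -> coprime (qA v) #|B i|.
  move=> i v hv; apply: (sub_pnat_coprime _ (hq (tag v) (tagged v)) (hB i)).
  move=> x; rewrite !inE => /eqP ->; apply/eqP => e.
  by move/hp_inj: e => e; rewrite e eqxx in hv.
split.
  move=> P; split; [exact: (claim1' hco) | exact: claim1].
move=> F; split.
  move=> [P [per hF]].
  have h1 := claim1' hco per.
  exists (fun i => pf_eval (restr_pf i (P i))); split; first by move=> i; case: (h1 i).
  move=> x; rewrite -hF; apply: functional_extensionality_dep => i.
  by apply: eval_restr; case: (h1 i).
move=> [f [perf hF]].
pose Q i := proj1_sig (constructive_indefinite_description _
   (exist_pf (hp_prime i) (hq i) (hB i) (perf i))).
have hQ : forall i y, pf_eval (Q i) y = f i y.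
  by move=> i; exact: (proj2_sig (constructive_indefinite_description _
   (exist_pf (hp_prime i) (hq i) (hB i) (perf i)))).
exists (fun i => liftpf (Q i)); split.
  apply: claim1 => i; split; first exact: ov_lift.
  rewrite restr_lift => y k; rewrite !hQ; exact: perf.
move=> x; rewrite hF; apply: functional_extensionality_dep => i.
by rewrite (eval_restr x (@ov_lift t n (B i) i (Q i))) restr_lift hQ.
Qed.
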